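(* Let $R,S$ be rings and $M$ an $(S,R)$-bimodule. If $M$ is a generator of ${}_S\mathcal{M}$ and the canonical map $\chi:R\to{}_S\mathrm{End}(M)$ is an epimorphism in the category of rings, then the coinduction functor $G={}_S\mathrm{Hom}(M,\bullet):{}_S\mathcal{M}\to{}_R\mathcal{M}$ is fully faithful, that is, all counit maps $\varepsilon_Q:M\otimes_R{}_S\mathrm{Hom}(M,Q)\to Q$, $\varepsilon_Q(m\otimes_R f)=(m)f$, are isomorphisms.
   Context: Left $S$-linear maps are written on the right: $(m)f$; ${}_S\mathrm{End}(M)$ is a ring with $(m)(fg)=((m)f)g$, and $\chi(r)$ is the endomorphism $m\mapsto mr$. For $Q\in{}_S\mathcal{M}$, ${}_S\mathrm{Hom}(M,Q)$ is a left $R$-module via $(m)(r\cdot f)=(mr)f$. $G$ is right adjoint to $M\otimes_R\bullet:{}_R\mathcal{M}\to{}_S\mathcal{M}$ with counit $\varepsilon$ as given. *)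

(* Defs.v *)
From HB Require Import structures.
From mathcomp Require Import all_boot all_order all_algebra.
Set Implicit Arguments. Unset Strict Implicit. Unset Printing Implicit Defensive.
Import GRing.Theory.
Local Open Scope ring_scope.

(* Left S-modules are [lmodType S].  Maps are applied as ordinary functions;
   the paper's right-written (m)f is here [f m]. *)

Definition is_Slin (S : pzRingType) (M Q : lmodType S) (f : M -> Q) : Prop :=
  forall (s : S) (x y : M), f (s *: x + y) = s *: f x + f y.

Definition is_additive (A B : zmodType) (phi : A -> B) : Prop :=
  forall x y, phi (x + y) = phi x + phi y.

Definition is_bimodule (S R : pzRingType) (M : lmodType S) (ract : M -> R -> M) : Prop :=
  [/\ (forall m r1 r2, ract m (r1 + r2) = ract m r1 + ract m r2),
      (forall m1 m2 r, ract (m1 + m2) r = ract m1 r + ract m2 r),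
      (forall m r1 r2, ract m (r1 * r2) = ract (ract m r1) r2),
      (forall m, ract m 1 = m) &
      (forall (s : S) m r, ract (s *: m) r = s *: ract m r)].

(* M is a generator of S-Mod: every left S-module N is the sum of the images
   of the S-linear maps M -> N (equivalently, N is an epimorphic image of a
   direct sum of copies of M). *)
Definition is_generator (S : pzRingType) (M : lmodType S) : Prop :=
  forall (N : lmodType S) (n : N),
    exists (k : nat) (fs : 'I_k -> M -> N) (ms : 'I_k -> M),
      (forall i, is_Slin (fs i)) /\ n = \sum_(i < k) fs i (ms i).

Section Coinduction.
Variables (S R : pzRingType) (M : lmodType S) (ract : M -> R -> M).

Definition chi (r : R) : M -> M := fun m => ract m r.

(* g : End_S(M) -> T is a (unital) ring morphism, where End_S(M) is the ring of
   S-linear maps M -> M with pointwise sum and product (fg)(m) = g (f m)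
   (maps written on the right).  Only the values of g on S-linear maps matter. *)
Definition is_End_rmorph (T : pzRingType) (g : (M -> M) -> T) : Prop :=
  [/\ (forall f1 f2, is_Slin f1 -> is_Slin f2 ->
         g (fun m => f1 m + f2 m) = g f1 + g f2),
      (forall f1 f2, is_Slin f1 -> is_Slin f2 ->
         g (fun m => f2 (f1 m)) = g f1 * g f2) &
      g (fun m => m) = 1].

Definition chi_ring_epi : Prop :=
  forall (T : pzRingType) (g h : (M -> M) -> T),
    is_End_rmorph g -> is_End_rmorph h ->
    (forall r, g (chi r) = h (chi r)) ->
    forall f, is_Slin f -> g f = h f.

(* Maps M x Hom_S(M,Q) -> A that are biadditive and R-balanced, where the left
   R-action on Hom_S(M,Q) is (r.f)(m) = f (m r). *)
Definition is_Rbalanced (Q : lmodType S) (A : zmodType)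
    (beta : M -> (M -> Q) -> A) : Prop :=
  [/\ (forall m1 m2 f, is_Slin f -> beta (m1 + m2) f = beta m1 f + beta m2 f),
      (forall m f1 f2, is_Slin f1 -> is_Slin f2 ->
         beta m (fun x => f1 x + f2 x) = beta m f1 + beta m f2) &
      (forall m r f, is_Slin f -> beta (ract m r) f = beta m (fun x => f (ract x r)))].

Definition is_tensor_product (Q : lmodType S) (P : zmodType)
    (t : M -> (M -> Q) -> P) : Prop :=
  is_Rbalanced t /\
  forall (A : zmodType) (beta : M -> (M -> Q) -> A), is_Rbalanced beta ->
    (exists phi : P -> A, is_additive phi /\
        forall m f, is_Slin f -> phi (t m f) = beta m f) /\
    (forall phi1 phi2 : P -> A, is_additive phi1 -> is_additive phi2 ->
        (forall m f, is_Slin f -> phi1 (t m f) = beta m f) ->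
        (forall m f, is_Slin f -> phi2 (t m f) = beta m f) ->
        forall x, phi1 x = phi2 x).

(* The counit eps_Q : M (x)_R Hom_S(M,Q) -> Q, m (x) f |-> (m)f, is an
   isomorphism iff (Q, (m,f) |-> f m) is itself a tensor product
   M (x)_R Hom_S(M,Q). *)
Definition counit_iso (Q : lmodType S) : Prop :=
  is_tensor_product (fun (m : M) (f : M -> Q) => f m).

End Coinduction.

(* Main.v *)
Require Import Defs.
From HB Require Import structures.
From mathcomp Require Import all_boot all_order all_algebra.
From mathcomp Require Import boolp.
Set Implicit Arguments. Unset Strict Implicit. Unset Printing Implicit Defensive.
Import GRing.Theory.
Local Open Scope ring_scope.


Record sfun (D : Type) (W : zmodType) (P : (D -> W) -> Prop)
  (P0 : P (fun _ => 0)) (PN : forall f, P f -> P (fun x => - f x))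
  (PD : forall f g, P f -> P g -> P (fun x => f x + g x)) : Type :=
  SFun { sfv :> D -> W; sfP : P sfv }.

Section SFunZ.
Variables (D : Type) (W : zmodType) (P : (D -> W) -> Prop)
  (P0 : P (fun _ => 0)) (PN : forall f, P f -> P (fun x => - f x))
  (PD : forall f g, P f -> P g -> P (fun x => f x + g x)).
Local Notation T := (@sfun D W P P0 PN PD).

Lemma sfun_eq (x y : T) : (forall d, x d = y d) -> x = y.
Proof.
case: x => x Px; case: y => y Py /= H.
have E : x = y by apply: funext.
subst y; congr SFun; exact: Prop_irrelevance.
Qed.

HB.instance Definition _ := gen_eqMixin T.
HB.instance Definition _ := gen_choiceMixin T.

Definition sf0 : T := @SFun D W P P0 PN PD _ P0.
Definition sfopp (x : T) : T := @SFun D W P P0 PN PD _ (PN (sfP x)).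
Definition sfadd (x y : T) : T := @SFun D W P P0 PN PD _ (PD (sfP x) (sfP y)).

Lemma sfaddA : associative sfadd.
Proof. by move=> x y z; apply: sfun_eq => d /=; rewrite addrA. Qed.
Lemma sfaddC : commutative sfadd.
Proof. by move=> x y; apply: sfun_eq => d /=; rewrite addrC. Qed.
Lemma sfadd0 : left_id sf0 sfadd.
Proof. by move=> x; apply: sfun_eq => d /=; rewrite add0r. Qed.
Lemma sfaddN : left_inverse sf0 sfopp sfadd.
Proof. by move=> x; apply: sfun_eq => d /=; rewrite addNr. Qed.

HB.instance Definition _ := GRing.isZmodule.Build T sfaddA sfaddC sfadd0 sfaddN.

Lemma sfun0E d : (0 : T) d = 0. Proof. by []. Qed.
Lemma sfunDE (x y : T) d : (x + y) d = x d + y d. Proof. by []. Qed.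
Lemma sfunNE (x : T) d : (- x) d = - x d. Proof. by []. Qed.
End SFunZ.

Definition addp (D W : zmodType) (f : D -> W) := forall x y, f (x + y) = f x + f y.
Lemma addp0 (D W : zmodType) : addp (fun _ : D => 0 : W).
Proof. by move=> x y; rewrite addr0. Qed.
Lemma addpN (D W : zmodType) (f : D -> W) : addp f -> addp (fun x => - f x).
Proof. by move=> H x y; rewrite H opprD. Qed.
Lemma addpD (D W : zmodType) (f g : D -> W) : addp f -> addp g -> addp (fun x => f x + g x).
Proof. by move=> Hf Hg x y; rewrite Hf Hg addrACA. Qed.

Section EndZ.
Variable V : zmodType.
Definition EndZ := @sfun V V (@addp V V) (@addp0 V V) (@addpN V V) (@addpD V V).
HB.instance Definition _ := GRing.Zmodule.on EndZ.
Lemma addp_id : addp (fun x : V => x). Proof. by []. Qed.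
Definition e1 : EndZ := @SFun V V _ _ _ _ (fun x => x) addp_id.
Lemma addp_comp (a b : V -> V) : addp a -> addp b -> addp (fun x => a (b x)).
Proof. by move=> Ha Hb x y; rewrite Hb Ha. Qed.
Definition emul (a b : EndZ) : EndZ := @SFun V V _ _ _ _ _ (addp_comp (sfP a) (sfP b)).
Lemma emulA : associative emul. Proof. by move=> a b c; apply: sfun_eq. Qed.
Lemma emul1l : left_id e1 emul. Proof. by move=> a; apply: sfun_eq. Qed.
Lemma emul1r : right_id e1 emul. Proof. by move=> a; apply: sfun_eq. Qed.
Lemma emulDl : left_distributive emul +%R. Proof. by move=> a b c; apply: sfun_eq. Qed.
Lemma emulDr : right_distributive emul +%R.
Proof. by move=> a b c; apply: sfun_eq => d /=; rewrite (sfP a). Qed.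
HB.instance Definition _ := GRing.Zmodule_isPzRing.Build EndZ emulA emul1l emul1r emulDl emulDr.
Lemma EndZ_mulE (a b : EndZ) x : (a * b) x = a (b x). Proof. by []. Qed.
Lemma EndZ_1E x : (1 : EndZ) x = x. Proof. by []. Qed.
End EndZ.

Section Slin.
Variables (S : pzRingType) (M Q : lmodType S).
Lemma Slin0f (f : M -> Q) : is_Slin f -> f 0 = 0.
Proof.
move=> H; have E := H 1 0 0; rewrite !scale1r addr0 in E.
by apply: (addrI (f 0)); rewrite addr0 -E.
Qed.
Lemma SlinD (f : M -> Q) : is_Slin f -> addp f.
Proof. by move=> H x y; rewrite -{1}[x]scale1r H scale1r. Qed.
Lemma SlinZ (f : M -> Q) : is_Slin f -> forall s x, f (s *: x) = s *: f x.
Proof. by move=> H s x; rewrite -[s *: x]addr0 H Slin0f // addr0. Qed.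
Lemma Slin_0 : is_Slin (fun _ : M => 0 : Q).
Proof. by move=> s x y; rewrite scaler0 addr0. Qed.
Lemma Slin_N (f : M -> Q) : is_Slin f -> is_Slin (fun x => - f x).
Proof. by move=> H s x y; rewrite H opprD scalerN. Qed.
Lemma Slin_D (f g : M -> Q) : is_Slin f -> is_Slin g -> is_Slin (fun x => f x + g x).
Proof. by move=> Hf Hg s x y; rewrite Hf Hg scalerDr addrACA. Qed.
End Slin.
Lemma Slin_comp (S : pzRingType) (M N Q : lmodType S) (f : N -> Q) (e : M -> N) :
  is_Slin f -> is_Slin e -> is_Slin (fun x => f (e x)).
Proof. by move=> Hf He s x y; rewrite He Hf. Qed.

Lemma addp_comp2 (U V W : zmodType) (a : V -> W) (b : U -> V) :
  addp a -> addp b -> addp (fun x => a (b x)).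
Proof. by move=> Ha Hb x y; rewrite Hb Ha. Qed.

Section Ebal.
Variables (R S : pzRingType) (M : lmodType S) (ract : M -> R -> M) (Q : lmodType S)
  (A : zmodType) (beta : M -> (M -> Q) -> A).
Hypotheses (Hbim : is_bimodule ract) (Hb : is_Rbalanced ract beta).

Definition X1 := @sfun M A (@addp M A) (@addp0 M A) (@addpN M A) (@addpD M A).
Definition X2 := @sfun M Q (@is_Slin S M Q) (@Slin_0 S M Q) (@Slin_N S M Q) (@Slin_D S M Q).
Definition X := (X1 * X2)%type.
Definition T := EndZ X.

Definition gact (e : M -> M) (He : is_Slin e) (x : X) : X :=
  (@SFun M A _ _ _ _ (fun m => x.1 (e m)) (addp_comp2 (sfP x.1) (SlinD He)),
   @SFun M Q _ _ _ _ (fun m => x.2 (e m)) (Slin_comp (sfP x.2) He)).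
Lemma gact_add e He : addp (@gact e He).
Proof. by move=> x y; congr (_, _); apply: sfun_eq. Qed.
Definition gT e He : T := @SFun X X _ _ _ _ _ (@gact_add e He).
Definition g (e : M -> M) : T :=
  match pselect (is_Slin e) with left He => gT He | right _ => 0 end.
Lemma gE e (He : is_Slin e) : g e = gT He.
Proof.
rewrite /g; case: pselect => [H|H]; last by case: (H He).
by congr gT; exact: Prop_irrelevance.
Qed.

Lemma beta_add1 (f : M -> Q) : is_Slin f -> addp (fun m => beta m f).
Proof. by case: Hb => H1 _ _ Hf x y; rewrite H1. Qed.

Definition nfun (x : X) : X :=
  (@SFun M A _ _ _ _ (fun m => beta m x.2) (beta_add1 (sfP x.2)), 0).
Lemma nfun_add : addp nfun.
Proof.
move=> x y; congr (_, _); last by rewrite addr0.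
apply: sfun_eq => m /=.
by case: Hb => _ H2 _; rewrite H2 //; [exact: (sfP x.2)| exact: (sfP y.2)].
Qed.
Definition nT : T := @SFun X X _ _ _ _ _ nfun_add.

Lemma beta_f0 m : beta m (fun _ => 0) = 0.
Proof.
case: Hb => _ H2 _; have := H2 m _ _ (@Slin_0 S M Q) (@Slin_0 S M Q).
have -> : (fun _ : M => (0 : Q) + 0) = (fun _ => 0) by apply: funext => ?; rewrite addr0.
by move=> E; apply: (addrI (beta m (fun _ => 0))); rewrite addr0 -E.
Qed.

Lemma nn : nT * nT = 0.
Proof.
apply: sfun_eq => x; rewrite EndZ_mulE /=; congr (_, _).
by apply: sfun_eq => m /=; rewrite beta_f0.
Qed.

Lemma comm e (He : is_Slin e) : (nT * g e = g e * nT) <->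
  (forall f, is_Slin f -> forall m, beta m (fun x => f (e x)) = beta (e m) f).
Proof.
rewrite gE; split.
  move=> H f Hf m.
  have := congr1 (fun t : T => sfv (t (0, @SFun M Q _ _ _ _ f Hf)).1 m) H.
  by rewrite /= .
move=> H; apply: sfun_eq => x; rewrite !EndZ_mulE /=; congr (_, _).
  by apply: sfun_eq => m /=; rewrite H //; exact: (sfP x.2).
by apply: sfun_eq.
Qed.

Lemma g_rmorph : is_End_rmorph g.
Proof.
split.
- move=> f1 f2 H1 H2; rewrite (gE (Slin_D H1 H2)) (gE H1) (gE H2).
  apply: sfun_eq => x /=; congr (_, _); apply: sfun_eq => m /=.
    exact: (sfP x.1).
  exact: SlinD (sfP x.2) _ _.
- move=> f1 f2 H1 H2; rewrite (gE (Slin_comp H2 H1)) (gE H1) (gE H2).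
  by apply: sfun_eq => x /=; congr (_, _); apply: sfun_eq.
- have Hid : is_Slin (fun m : M => m) by [].
  rewrite (gE Hid); apply: sfun_eq => -[x1 x2] /=; congr (_, _); exact: sfun_eq.
Qed.

Definition u : T := 1 + nT.
Definition v : T := 1 - nT.
Lemma uv : u * v = 1.
Proof. rewrite /u /v mulrDl mul1r mulrBr mulr1 nn oppr0 addr0. by rewrite subrK. Qed.
Lemma vu : v * u = 1.
Proof. by rewrite /u /v mulrBl mul1r mulrDr mulr1 nn addr0 addrK. Qed.
Definition h (e : M -> M) : T := u * g e * v.

Lemma h_rmorph : is_End_rmorph h.
Proof.
case: g_rmorph => G1 G2 G3; split.
- move=> f1 f2 H1 H2; by rewrite /h G1 // [u * _]mulrDr mulrDl.
- move=> f1 f2 H1 H2; rewrite /h G2 //.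
  by rewrite -!mulrA; congr (_ * _); rewrite [v * _]mulrA vu mul1r.
- by rewrite /h (G3 : g (fun m : M => m) = 1) mulr1 uv.
Qed.

Lemma chi_Slin r : is_Slin (chi ract r).
Proof. by case: Hbim => _ H2 _ _ H5 s x y; rewrite /chi H2 H5. Qed.

Lemma Ebal : chi_ring_epi ract -> forall e, is_Slin e -> forall f, is_Slin f ->
  forall m, beta (e m) f = beta m (fun x => f (e x)).
Proof.
move=> Hepi e He f Hf m.
have Hgh : forall r, g (chi ract r) = h (chi ract r).
  move=> r; have /(comm (chi_Slin r)) C : forall f, is_Slin f -> forall m,
      beta m (fun x => f (chi ract r x)) = beta (chi ract r m) f.
    by move=> f' Hf' m'; case: Hb => _ _ H3; rewrite /chi H3.
  have ug : u * g (chi ract r) = g (chi ract r) * u by rewrite /u mulrDl mulrDr mul1r mulr1 C.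
  by rewrite /h ug -mulrA uv mulr1.
have E := Hepi _ _ _ g_rmorph h_rmorph Hgh e He.
have E2 : u * g e = g e * u.
  by rewrite {2}E /h -!mulrA vu mulr1.
have E3 : nT * g e = g e * nT.
  by move: E2; rewrite /u mulrDl mulrDr mul1r mulr1 => /addrI.
by rewrite (proj1 (comm He) E3).
Qed.
End Ebal.

Lemma add_0 (A B : zmodType) (phi : A -> B) : (forall x y, phi (x + y) = phi x + phi y) -> phi 0 = 0.
Proof. by move=> H; apply: (addrI (phi 0)); rewrite -H !addr0. Qed.

Lemma add_sum (A B : zmodType) (phi : A -> B) : (forall x y, phi (x + y) = phi x + phi y) ->
  forall k (F : 'I_k -> A), phi (\sum_(i < k) F i) = \sum_(i < k) phi (F i).
Proof. by move=> H k F; apply: (big_morph phi H (add_0 H)). Qed.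

Theorem proposition3p11 (R S : pzRingType) (M : lmodType S) (ract : M -> R -> M) :
  is_bimodule ract ->
  is_generator M ->
  chi_ring_epi ract ->
  forall Q : lmodType S, counit_iso ract Q.
Proof.
move=> Hbim Hgen Hepi Q; split.
  split.
  - by move=> m1 m2 f Hf; rewrite (SlinD Hf).
  - by [].
  - by [].
move=> A beta Hbeta.
have [k [ps [ys [Hps Hsum]]]] := Hgen (S^o) 1.
pose rho (j : 'I_k) (q : Q) := fun z : M => (ps j z : S) *: q.
have Hrho : forall j q, is_Slin (rho j q).
  move=> j q s x y; rewrite /rho (Hps j s x y).
  by rewrite scalerDl -scalerA.
have Hq : forall q, q = \sum_(j < k) rho j q (ys j).
  move=> q; rewrite /rho -scaler_suml.
  by rewrite -[X in X *: q]/((\sum_(j < k) ps j (ys j) : S^o) : S) -Hsum scale1r.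
case: Hbeta => B1 B2 B3.
have Hbsum : forall f, is_Slin f -> forall (F : 'I_k -> M),
    beta (\sum_(j < k) F j) f = \sum_(j < k) beta (F j) f.
  by move=> f Hf F; apply: (add_sum (phi := fun m => beta m f)) => x y; rewrite B1.
have Eb := Ebal Hbim (And3 B1 B2 B3) Hepi.
split.
  exists (fun q => \sum_(j < k) beta (ys j) (rho j q)); split.
    move=> q1 q2; rewrite -big_split /=; apply: eq_bigr => j _.
    have -> : rho j (q1 + q2) = (fun z => rho j q1 z + rho j q2 z).
      by apply: funext => z; rewrite /rho scalerDr.
    by rewrite B2.
  move=> m f Hf /=.
  pose e (j : 'I_k) := fun z : M => (ps j z : S) *: m.
  have He : forall j, is_Slin (e j).
    by move=> j s x y; rewrite /e (Hps j s x y) scalerDl -scalerA.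
  have Erho : forall j, rho j (f m) = (fun z => f (e j z)).
    by move=> j; apply: funext => z; rewrite /rho /e (SlinZ Hf).
  under eq_bigr => j _ do rewrite Erho -(Eb _ (He j) _ Hf).
  rewrite -Hbsum //; congr (beta _ f).
  rewrite /e -scaler_suml.
  by rewrite -[X in X *: m]/((\sum_(j < k) ps j (ys j) : S^o) : S) -Hsum scale1r.
move=> phi1 phi2 H1 H2 H3 H4 q.
rewrite (Hq q) (add_sum H1) (add_sum H2); apply: eq_bigr => j _.
by rewrite H3 // H4.
Qed.
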